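(* For all integers $k,n\ge 1$, \begin{align*} \zeta^*(k+1,\underbrace{1,\dots,1}_{n})&=\sum_{t=1}^{n+1}\ \sum_{\substack{a_1+\dots+a_k=n+1-t\\ a_i\ge 0}}\zeta(a_k+t+1,\,a_1+1,\,a_2+1,\dots,a_{k-1}+1)\\ &=\sum_{\substack{a_1+\dots+a_k=n\\ a_i\ge 0}}(a_k+1)\,\zeta(a_k+2,\,a_1+1,\,a_2+1,\dots,a_{k-1}+1). \end{align*}
   Context: For positive integers $k_1,\dots,k_n$ with $k_1\ge 2$, $\zeta(k_1,\dots,k_n)=\sum_{m_1>\dots>m_n\ge 1}\prod_i m_i^{-k_i}$ and $\zeta^*(k_1,\dots,k_n)=\sum_{m_1\ge\dots\ge m_n\ge 1}\prod_i m_i^{-k_i}$. $\underbrace{1,\dots,1}_{n}$ denotes $n$ entries equal to $1$. For $k=1$ the arguments after the first entry are absent. *)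

(* Defs.v *)
From Stdlib Require Import Reals List Arith.
From Coquelicot Require Import Coquelicot.
Import ListNotations.
Open Scope R_scope.

Definition lsum {A : Type} (f : A -> R) (l : list A) : R :=
  fold_right Rplus 0 (map f l).

(* Truncated multiple zeta sum:
   mzv_trunc N [k1;...;kn] = sum_{N >= m1 > m2 > ... > mn >= 1} prod m_i^{-k_i}. *)
Fixpoint mzv_trunc (N : nat) (ks : list nat) : R :=
  match ks with
  | [] => 1
  | k :: ks' =>
      lsum (fun m => / (INR m ^ k) * mzv_trunc (m - 1) ks') (seq 1 N)
  end.

(* Truncated multiple zeta-star sum:
   mzsv_trunc N [k1;...;kn] = sum_{N >= m1 >= m2 >= ... >= mn >= 1} prod m_i^{-k_i}. *)
Fixpoint mzsv_trunc (N : nat) (ks : list nat) : R :=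
  match ks with
  | [] => 1
  | k :: ks' =>
      lsum (fun m => / (INR m ^ k) * mzsv_trunc m ks') (seq 1 N)
  end.

(* zeta(k1,...,kn) and zeta*(k1,...,kn) as limits of the (nondecreasing)
   truncated sums; these are the values of the infinite series of nonnegative terms. *)
Definition mzv (ks : list nat) : R := real (Lim_seq (fun N => mzv_trunc N ks)).
Definition mzsv (ks : list nat) : R := real (Lim_seq (fun N => mzsv_trunc N ks)).

Fixpoint weak_comps (k m : nat) : list (list nat) :=
  match k with
  | O => if Nat.eqb m 0 then [[]] else []
  | S k' => flat_map (fun a => map (cons a) (weak_comps k' (m - a))) (seq 0 (S m))
  end.

(* For a = [a_1;...;a_k]: a_k is [last a 0], and [map S (removelast a)]
   is [a_1+1; ...; a_{k-1}+1]. *)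

(* Main.v *)
Require Import Defs.
From Stdlib Require Import Reals List Arith.
From Coquelicot Require Import Coquelicot.
Import ListNotations.
Open Scope R_scope.
From Stdlib Require Import Lra Lia FunctionalExtensionality.
Open Scope R_scope.


Lemma lsum_nil {A} (f : A -> R) : lsum f [] = 0.
Proof. reflexivity. Qed.
Lemma lsum_cons {A} (f : A -> R) x l : lsum f (x :: l) = f x + lsum f l.
Proof. reflexivity. Qed.
Lemma lsum_app {A} (f : A -> R) l1 l2 : lsum f (l1 ++ l2) = lsum f l1 + lsum f l2.
Proof. induction l1; simpl; [unfold lsum; simpl; lra|]. rewrite !lsum_cons, IHl1; lra. Qed.
Lemma lsum_ext {A} (f g : A -> R) l : (forall x, In x l -> f x = g x) -> lsum f l = lsum g l.
Proof. induction l; intros H; [reflexivity|]. rewrite !lsum_cons, H, IHl; auto. intros; apply H; simpl; auto. left; auto. Qed.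
Lemma lsum_plus {A} (f g : A -> R) l : lsum (fun x => f x + g x) l = lsum f l + lsum g l.
Proof. induction l; [unfold lsum; simpl; lra|]. rewrite !lsum_cons, IHl; lra. Qed.
Lemma lsum_minus {A} (f g : A -> R) l : lsum (fun x => f x - g x) l = lsum f l - lsum g l.
Proof. induction l; [unfold lsum; simpl; lra|]. rewrite !lsum_cons, IHl; lra. Qed.
Lemma lsum_scal {A} c (f : A -> R) l : lsum (fun x => c * f x) l = c * lsum f l.
Proof. induction l; [unfold lsum; simpl; lra|]. rewrite !lsum_cons, IHl; lra. Qed.
Lemma lsum_scal_r {A} c (f : A -> R) l : lsum (fun x => f x * c) l = lsum f l * c.
Proof. induction l; [unfold lsum; simpl; lra|]. rewrite !lsum_cons, IHl; lra. Qed.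
Lemma lsum_zero {A} (l : list A) : lsum (fun _ => 0) l = 0.
Proof. induction l; [reflexivity|]. rewrite lsum_cons, IHl; lra. Qed.
Lemma lsum_const {A} c (l : list A) : lsum (fun _ => c) l = INR (length l) * c.
Proof. induction l; [unfold lsum; simpl; lra|]. rewrite lsum_cons, IHl. simpl length. rewrite S_INR. lra. Qed.
Lemma lsum_nonneg {A} (f : A -> R) l : (forall x, In x l -> 0 <= f x) -> 0 <= lsum f l.
Proof. induction l; intros H; [unfold lsum; simpl; lra|]. rewrite lsum_cons.
  assert (0 <= f a) by (apply H; left; auto). assert (0 <= lsum f l) by (apply IHl; intros; apply H; right; auto). lra. Qed.
Lemma lsum_le {A} (f g : A -> R) l : (forall x, In x l -> f x <= g x) -> lsum f l <= lsum g l.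
Proof. induction l; intros H; [unfold lsum; simpl; lra|]. rewrite !lsum_cons.
  assert (f a <= g a) by (apply H; left; auto). assert (lsum f l <= lsum g l) by (apply IHl; intros; apply H; right; auto). lra. Qed.
Lemma lsum_member {A} (f : A -> R) l x : (forall y, In y l -> 0 <= f y) -> In x l -> f x <= lsum f l.
Proof. induction l; intros H Hx; [destruct Hx|]. rewrite lsum_cons. destruct Hx as [<-|Hx].
  - assert (0 <= lsum f l) by (apply lsum_nonneg; intros; apply H; right; auto). lra.
  - assert (0 <= f a) by (apply H; left; auto). assert (f x <= lsum f l) by (apply IHl; auto; intros; apply H; right; auto). lra. Qed.
Lemma lsum_map {A B} (f : B -> R) (g : A -> B) l : lsum f (map g l) = lsum (fun x => f (g x)) l.
Proof. induction l; [reflexivity|]. simpl map. rewrite !lsum_cons, IHl; auto. Qed.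
Lemma lsum_flat_map {A B} (f : B -> R) (g : A -> list B) l : lsum f (flat_map g l) = lsum (fun x => lsum f (g x)) l.
Proof. induction l; [reflexivity|]. simpl flat_map. rewrite lsum_app, lsum_cons, IHl; auto. Qed.
Lemma lsum_swap {A B} (F : A -> B -> R) l1 l2 :
  lsum (fun x => lsum (fun y => F x y) l2) l1 = lsum (fun y => lsum (fun x => F x y) l1) l2.
Proof. induction l1; simpl. - rewrite lsum_nil. symmetry. apply lsum_zero.
  - rewrite lsum_cons, IHl1. rewrite <- lsum_plus. apply lsum_ext. intros; rewrite lsum_cons; auto. Qed.
Lemma lsum_seq_S (f : nat -> R) a n : lsum f (seq a (S n)) = lsum f (seq a n) + f (a + n)%nat.
Proof. rewrite seq_S, lsum_app. rewrite lsum_cons, lsum_nil. lra. Qed.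
Lemma lsum_seq_shift (f : nat -> R) a n : lsum f (seq (S a) n) = lsum (fun i => f (S i)) (seq a n).
Proof. rewrite <- seq_shift, lsum_map. auto. Qed.
Lemma lsum_seq0 (f : nat -> R) n : lsum f (seq 0 (S n)) = f 0%nat + lsum (fun i => f (S i)) (seq 0 n).
Proof. simpl seq. rewrite lsum_cons, lsum_seq_shift. auto. Qed.

Lemma lsum_telescope (g : nat -> R) l n :
  lsum (fun i => g (i - 1)%nat - g i) (seq (S l) n) = g l - g (l + n)%nat.
Proof. induction n. - rewrite Nat.add_0_r. unfold lsum; simpl; lra.
  - rewrite lsum_seq_S, IHn. replace (S l + n - 1)%nat with (l + n)%nat by lia.
    replace (S l + n)%nat with (l + S n)%nat by lia. lra. Qed.

Lemma lsum_rev_seq (h : nat -> R) M : lsum h (seq 0 (S M)) = lsum (fun a => h (M - a)%nat) (seq 0 (S M)).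
Proof. revert h. induction M; intros h. - unfold lsum; simpl; lra.
  - rewrite (lsum_seq0 h (S M)). rewrite (IHM (fun i => h (S i))).
    rewrite (lsum_seq_S (fun a => h (S M - a)%nat) 0 (S M)).
    replace (S M - (0 + S M))%nat with 0%nat by lia.
    rewrite Rplus_comm. f_equal. apply lsum_ext. intros x Hx. apply in_seq in Hx. f_equal. lia. Qed.

Lemma lsum_tri (G : nat -> nat -> R) n :
  lsum (fun a => lsum (fun c => G a c) (seq 0 (S (n - a)))) (seq 0 (S n)) =
  lsum (fun c => lsum (fun a => G a c) (seq 0 (S (n - c)))) (seq 0 (S n)).
Proof. induction n.
  - unfold lsum; simpl; lra.
  - assert (E : forall (K : nat -> nat -> R),
      lsum (fun a => lsum (fun c => K a c) (seq 0 (S (S n - a)))) (seq 0 (S (S n))) =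
      lsum (fun a => lsum (fun c => K a c) (seq 0 (S (n - a)))) (seq 0 (S n)) +
      lsum (fun a => K a (S n - a)%nat) (seq 0 (S (S n)))).
    { intros K. rewrite (lsum_seq_S _ 0 (S n)). rewrite (lsum_seq_S (fun a => K a (S n - a)%nat) 0 (S n)).
      replace (S n - (0 + S n))%nat with 0%nat by lia. replace (0 + S n)%nat with (S n) by lia.
      replace (lsum (fun c : nat => K (S n) c) (seq 0 1)) with (K (S n) 0%nat) by (unfold lsum; simpl; lra). 
      assert (lsum (fun a => lsum (fun c => K a c) (seq 0 (S (S n - a)))) (seq 0 (S n)) =
        lsum (fun a => lsum (fun c => K a c) (seq 0 (S (n - a)))) (seq 0 (S n)) + 
        lsum (fun a => K a (S n - a)%nat) (seq 0 (S n))) as ->.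
      { rewrite <- lsum_plus. apply lsum_ext. intros a Ha. apply in_seq in Ha.
        replace (S (S n - a)) with (S (S (n - a))) by lia. rewrite lsum_seq_S. f_equal. f_equal. lia. }
      simpl (0+0)%nat. lra. }
    rewrite E. rewrite (E (fun c a => G a c)). rewrite IHn. f_equal.
    rewrite lsum_rev_seq. apply lsum_ext. intros a Ha. apply in_seq in Ha. f_equal. lia. Qed.


Definition ps := nat -> R.
Definition pone : ps := fun b => match b with O => 1 | _ => 0 end.
Definition pplus (f g : ps) : ps := fun b => f b + g b.
Definition pminus (f g : ps) : ps := fun b => f b - g b.
Definition pscal (c : R) (f : ps) : ps := fun b => c * f b.
Definition psum {A} (G : A -> ps) (l : list A) : ps := fun b => lsum (fun x => G x b) l.
Definition Dc (c : R) (f : ps) : ps :=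
  fun b => lsum (fun a => / c ^ (S a) * f (b - a)%nat) (seq 0 (S b)).
Definition Lc (c : R) (f : ps) : ps :=
  fun b => c * f b - match b with O => 0 | S b' => f b' end.

Lemma Dc_0 c f : Dc c f 0%nat = / c * f 0%nat.
Proof. unfold Dc. unfold lsum; simpl. rewrite Rmult_1_r. lra. Qed.
Lemma Dc_S c f b : Dc c f (S b) = / c * (f (S b) + Dc c f b).
Proof. unfold Dc at 1. rewrite lsum_seq0. rewrite Nat.sub_0_r.
  rewrite Rmult_plus_distr_l. f_equal. simpl. rewrite Rmult_1_r. auto.
  unfold Dc. rewrite <- lsum_scal. apply lsum_ext. intros x _.
  replace (S b - S x)%nat with (b - x)%nat by lia.
  change (c ^ S (S x)) with (c * c ^ (S x)). rewrite Rinv_mult. ring. Qed.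

Lemma LD c f : c <> 0 -> Lc c (Dc c f) = f.
Proof. intros Hc. extensionality b. unfold Lc. destruct b.
  - rewrite Dc_0. field. auto.
  - rewrite Dc_S. field. auto. Qed.
Lemma DL c f : c <> 0 -> Dc c (Lc c f) = f.
Proof. intros Hc. extensionality b. induction b.
  - rewrite Dc_0. unfold Lc. field. auto.
  - rewrite Dc_S, IHb. unfold Lc. field. auto. Qed.
Lemma Lc_inj c f g : c <> 0 -> Lc c f = Lc c g -> f = g.
Proof. intros Hc H. rewrite <- (DL c f Hc), <- (DL c g Hc), H. auto. Qed.
Lemma Lc_comm a c f : Lc a (Lc c f) = Lc c (Lc a f).
Proof. extensionality b. unfold Lc. destruct b as [|[|b]]; ring. Qed.
Lemma LD_comm a c f : c <> 0 -> Lc a (Dc c f) = Dc c (Lc a f).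
Proof. intros Hc. apply (Lc_inj c); auto. rewrite Lc_comm, !LD; auto. Qed.
Lemma Lc_plus c f g : Lc c (pplus f g) = pplus (Lc c f) (Lc c g).
Proof. extensionality b. unfold Lc, pplus. destruct b; ring. Qed.
Lemma Lc_minus c f g : Lc c (pminus f g) = pminus (Lc c f) (Lc c g).
Proof. extensionality b. unfold Lc, pminus. destruct b; ring. Qed.
Lemma Lc_scal c s f : Lc c (pscal s f) = pscal s (Lc c f).
Proof. extensionality b. unfold Lc, pscal. destruct b; ring. Qed.
Lemma Lc_add c d f : Lc (c + d) f = pplus (Lc c f) (pscal d f).
Proof. extensionality b. unfold Lc, pplus, pscal. destruct b; ring. Qed.
Lemma Dc_plus c f g : Dc c (pplus f g) = pplus (Dc c f) (Dc c g).
Proof. extensionality b. unfold Dc, pplus. rewrite <- lsum_plus. apply lsum_ext; intros; ring. Qed.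
Lemma Dc_minus c f g : Dc c (pminus f g) = pminus (Dc c f) (Dc c g).
Proof. extensionality b. unfold Dc, pminus. rewrite <- lsum_minus. apply lsum_ext; intros; ring. Qed.
Lemma Dc_scal c s f : Dc c (pscal s f) = pscal s (Dc c f).
Proof. extensionality b. unfold Dc, pscal. rewrite <- lsum_scal. apply lsum_ext; intros; ring. Qed.
Lemma Dc_psum {A} c (G : A -> ps) l : Dc c (psum G l) = psum (fun x => Dc c (G x)) l.
Proof. extensionality b. unfold Dc, psum. 
  rewrite (lsum_swap (fun x a => / c ^ S a * G x (b - a)%nat)). apply lsum_ext; intros.
  rewrite <- lsum_scal. auto. Qed.
Lemma psum_ext {A} (G H : A -> ps) l : (forall x, In x l -> G x = H x) -> psum G l = psum H l.
Proof. intros E. extensionality b. unfold psum. apply lsum_ext. intros x Hx. rewrite E; auto. Qed.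

Definition pnn (f : ps) := forall b, 0 <= f b.
Definition ple (f g : ps) := forall b, f b <= g b.

Lemma Dc_nn c f : 0 < c -> pnn f -> pnn (Dc c f).
Proof. intros Hc Hf b. unfold Dc. apply lsum_nonneg. intros a _.
  apply Rmult_le_pos; auto. left; apply Rinv_0_lt_compat, pow_lt; auto. Qed.
Lemma Dc_mono c c' f g : 0 < c -> c <= c' -> pnn f -> ple f g -> ple (Dc c' f) (Dc c g).
Proof. intros Hc Hcc Hf Hfg b. unfold Dc. apply lsum_le. intros a _.
  apply Rmult_le_compat; auto. left; apply Rinv_0_lt_compat, pow_lt; lra.
  apply Rinv_le_contravar. apply pow_lt; auto. apply pow_incr; lra. Qed.
Lemma Dc_pone c b : Dc c pone b = / c ^ (S b).
Proof. induction b. - rewrite Dc_0. simpl. rewrite !Rmult_1_r. reflexivity.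
  - rewrite Dc_S, IHb. simpl pone. rewrite Rplus_0_l. change (c ^ S (S b)) with (c * c ^ (S b)). rewrite Rinv_mult. auto. Qed.
Lemma DD_pone c b : c <> 0 -> Dc c (Dc c pone) b = INR (S b) * / c ^ (S (S b)).
Proof. intros Hc. induction b. - rewrite Dc_0, Dc_pone. simpl. field. auto.
  - rewrite Dc_S, IHb, Dc_pone. rewrite !S_INR. simpl. field. split; auto. apply pow_nonzero; auto. Qed.
Lemma pscal_nn s f : 0 <= s -> pnn f -> pnn (pscal s f).
Proof. intros Hs Hf b. unfold pscal. apply Rmult_le_pos; auto. Qed.
Lemma pone_nn : pnn pone.
Proof. intros [|b]; simpl; lra. Qed.

Definition Sb (f : ps) (b : nat) := lsum f (seq 0 (S b)).
Lemma Sb_nn f b : pnn f -> 0 <= Sb f b.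
Proof. intros H. apply lsum_nonneg. intros; apply H. Qed.
Lemma Sb_member f b c : pnn f -> (c <= b)%nat -> f c <= Sb f b.
Proof. intros H Hc. apply lsum_member. intros; apply H. apply in_seq. lia. Qed.
Lemma Sb_mono f g b : ple f g -> Sb f b <= Sb g b.
Proof. intros H. apply lsum_le. intros; apply H. Qed.
Lemma Sb_scal s f b : Sb (pscal s f) b = s * Sb f b.
Proof. unfold Sb, pscal. apply lsum_scal. Qed.
Lemma Sb_psum {A} (G : A -> ps) l b : Sb (psum G l) b = lsum (fun x => Sb (G x) b) l.
Proof. unfold Sb, psum. apply lsum_swap. Qed.

Lemma Dc_coef_bound c f b c0 : 1 <= c -> pnn f -> (c0 <= b)%nat ->
  Dc c f c0 <= INR (S b) * / c * Sb f b.
Proof. intros Hc Hf Hcb. unfold Dc.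
  apply Rle_trans with (lsum (fun _ => / c * Sb f b) (seq 0 (S c0))).
  - apply lsum_le. intros a Ha. apply in_seq in Ha. apply Rmult_le_compat; auto.
    left; apply Rinv_0_lt_compat, pow_lt; lra.
    apply Rinv_le_contravar; try lra. rewrite <- (pow_1 c) at 1. apply Rle_pow; auto; lia.
    apply Sb_member; auto; lia.
  - rewrite lsum_const, length_seq. assert (0 <= / c * Sb f b).
    { apply Rmult_le_pos. left; apply Rinv_0_lt_compat; lra. apply Sb_nn; auto. }
    rewrite Rmult_assoc. apply Rmult_le_compat_r; auto. apply le_INR. lia. Qed.
Lemma Sb_Dc c f b : 1 <= c -> pnn f -> Sb (Dc c f) b <= INR (S b) * INR (S b) * / c * Sb f b.
Proof. intros Hc Hf. unfold Sb at 1.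
  apply Rle_trans with (lsum (fun _ => INR (S b) * / c * Sb f b) (seq 0 (S b))).
  - apply lsum_le. intros a Ha. apply in_seq in Ha. apply Dc_coef_bound; auto; lia.
  - rewrite lsum_const, length_seq. lra. Qed.


Fixpoint F (m l : nat) : ps :=
  match m with O => pone | S m' => pscal (INR (S m')) (Dc (INR (l + S m')) (F m' l)) end.

Lemma INR_S_neq0 n : INR (S n) <> 0.
Proof. apply not_O_INR. lia. Qed.
Lemma INR_pos_neq0 n : (1 <= n)%nat -> INR n <> 0.
Proof. intros; apply not_O_INR. lia. Qed.

Lemma F_L m l : Lc (INR (l + S m)) (F (S m) l) = pscal (INR (S m)) (F m l).
Proof. simpl F. rewrite Lc_scal, LD; auto. apply INR_pos_neq0; lia. Qed.

Lemma F_shift m l : Lc (INR (S l)) (F m l) = Lc (INR (S l + m)) (F m (S l)).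
Proof. induction m.
  - rewrite Nat.add_0_r. reflexivity.
  - rewrite F_L. simpl F at 1. rewrite Lc_scal, LD_comm by (apply INR_pos_neq0; lia).
    rewrite IHm. replace (S l + m)%nat with (l + S m)%nat by lia. rewrite DL by (apply INR_pos_neq0; lia).
    reflexivity. Qed.

Lemma T1 m l : pscal (INR m) (Dc (INR (S l)) (F m (S l))) = pminus (F m l) (F m (S l)).
Proof. apply (Lc_inj (INR (S l))). apply INR_S_neq0.
  rewrite Lc_scal, LD by apply INR_S_neq0. rewrite Lc_minus, F_shift.
  rewrite plus_INR, Lc_add. extensionality b. unfold pminus, pplus, pscal. ring. Qed.

Lemma T2 m l : (1 <= l)%nat ->
  pscal (/ INR (S m)) (F (S m) l) = Dc (INR l) (pminus (F m l) (F (S m) l)).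
Proof. intros Hl. apply (Lc_inj (INR l)). apply INR_pos_neq0; auto.
  rewrite LD by (apply INR_pos_neq0; auto). rewrite Lc_scal.
  assert (E := F_L m l). rewrite plus_INR, Lc_add in E.
  extensionality b. apply (f_equal (fun f => f b)) in E. unfold pplus, pscal in E. unfold pscal, pminus.
  assert (INR (S m) <> 0) by apply INR_S_neq0.
  apply (Rmult_eq_reg_l (INR (S m))); auto. field_simplify; auto. lra. Qed.

Lemma F_nn m l : pnn (F m l).
Proof. induction m; simpl F. apply pone_nn. apply pscal_nn. apply (pos_INR (S m)).
  apply Dc_nn; auto. apply lt_0_INR; lia. Qed.

Fixpoint Psi (j l0 U : nat) (f : nat -> ps) : ps :=
  match j with
  | O => f l0
  | S j' => psum (fun l => Dc (INR l) (Psi j' l U f)) (seq (S l0) (U - l0))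
  end.

Lemma psum_plus {A} (G H : A -> ps) l : psum (fun x => pplus (G x) (H x)) l = pplus (psum G l) (psum H l).
Proof. extensionality b. unfold psum, pplus. apply lsum_plus. Qed.
Lemma psum_minus {A} (G H : A -> ps) l : psum (fun x => pminus (G x) (H x)) l = pminus (psum G l) (psum H l).
Proof. extensionality b. unfold psum, pminus. apply lsum_minus. Qed.
Lemma psum_scal {A} s (G : A -> ps) l : psum (fun x => pscal s (G x)) l = pscal s (psum G l).
Proof. extensionality b. unfold psum, pscal. apply lsum_scal. Qed.
Lemma psum_swap {A B} (G : A -> B -> ps) l1 l2 :
  psum (fun x => psum (fun y => G x y) l2) l1 = psum (fun y => psum (fun x => G x y) l1) l2.
Proof. extensionality b. unfold psum. apply lsum_swap. Qed.

Lemma in_seq' x a n : In x (seq a n) -> (a <= x < a + n)%nat.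
Proof. apply in_seq. Qed.

Lemma Psi_ext j : forall l0 U f g, (l0 <= U)%nat -> (forall l, (l0 <= l <= U)%nat -> f l = g l) ->
  Psi j l0 U f = Psi j l0 U g.
Proof. induction j; intros l0 U f g H1 H2; simpl.
  - apply H2; lia.
  - apply psum_ext. intros x Hx. apply in_seq' in Hx. rewrite (IHj x U f g); auto; try lia.
    intros; apply H2; lia. Qed.
Lemma Psi_extS j l0 U f g : (forall l, (l0 < l <= U)%nat -> f l = g l) ->
  Psi (S j) l0 U f = Psi (S j) l0 U g.
Proof. intros H2; simpl. apply psum_ext. intros x Hx. apply in_seq' in Hx. rewrite (Psi_ext j x U f g); auto; try lia.
    intros; apply H2; lia. Qed.
Lemma Psi_plus j : forall l0 U f g, Psi j l0 U (fun l => pplus (f l) (g l)) = pplus (Psi j l0 U f) (Psi j l0 U g).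
Proof. induction j; intros; simpl; auto. rewrite <- psum_plus. apply psum_ext. intros.
  rewrite IHj, Dc_plus. auto. Qed.
Lemma Psi_minus j : forall l0 U f g, Psi j l0 U (fun l => pminus (f l) (g l)) = pminus (Psi j l0 U f) (Psi j l0 U g).
Proof. induction j; intros; simpl; auto. rewrite <- psum_minus. apply psum_ext. intros.
  rewrite IHj, Dc_minus. auto. Qed.
Lemma Psi_scal j : forall l0 U s f, Psi j l0 U (fun l => pscal s (f l)) = pscal s (Psi j l0 U f).
Proof. induction j; intros; simpl; auto. rewrite <- psum_scal. apply psum_ext. intros.
  rewrite IHj, Dc_scal. auto. Qed.
Lemma Psi_psum {A} j : forall l0 U (G : A -> nat -> ps) xs,
  Psi j l0 U (fun l => psum (fun x => G x l) xs) = psum (fun x => Psi j l0 U (G x)) xs.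
Proof. induction j; intros; simpl; auto. rewrite <- psum_swap. apply psum_ext. intros.
  rewrite IHj, Dc_psum. auto. Qed.
Lemma Psi_shift j : forall l0 U g,
  Psi j l0 U (fun l => psum (fun l' => Dc (INR l') (g l')) (seq (S l) (U - l))) = Psi (S j) l0 U g.
Proof. induction j; intros; [reflexivity|]. simpl Psi at 1. 
  change (Psi (S (S j)) l0 U g) with (psum (fun l => Dc (INR l) (Psi (S j) l U g)) (seq (S l0) (U - l0))).
  apply psum_ext. intros. rewrite IHj. auto. Qed.

Lemma psum_nn {A} (G : A -> ps) l : (forall x, In x l -> pnn (G x)) -> pnn (psum G l).
Proof. intros H b. unfold psum. apply lsum_nonneg. intros x Hx; apply H; auto. Qed.

Lemma Psi_nn j : forall l0 U f, (forall l, (l0 <= l)%nat -> pnn (f l)) -> pnn (Psi j l0 U f).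
Proof. induction j; intros l0 U f H; simpl. apply H; lia.
  apply psum_nn. intros x Hx. apply in_seq' in Hx. apply Dc_nn. apply lt_0_INR; lia.
  apply IHj. intros; apply H; lia. Qed.
Lemma Psi_mono j : forall l0 U f g, (forall l, (l0 <= l)%nat -> pnn (f l)) ->
  (forall l, (l0 <= l)%nat -> ple (f l) (g l)) -> ple (Psi j l0 U f) (Psi j l0 U g).
Proof. induction j; intros l0 U f g Hn H; simpl. apply H; lia.
  intros b. unfold psum. apply lsum_le. intros x Hx. apply in_seq' in Hx. apply Dc_mono.
  apply lt_0_INR; lia. lra. apply Psi_nn. intros; apply Hn; lia.
  apply IHj; intros; [apply Hn|apply H]; lia. Qed.

Definition Hh (U : nat) : R := lsum (fun l => / INR l) (seq 1 U).
Lemma H_nn U : 0 <= Hh U.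
Proof. apply lsum_nonneg. intros x Hx. apply in_seq' in Hx. left; apply Rinv_0_lt_compat, lt_0_INR; lia. Qed.
Lemma H_sub l0 U : lsum (fun l => / INR l) (seq (S l0) (U - l0)) <= Hh U.
Proof. destruct (le_lt_dec l0 U).
  - unfold Hh. replace U with (l0 + (U - l0))%nat at 2 by lia. rewrite seq_app, lsum_app.
    replace (1 + l0)%nat with (S l0) by lia.
    assert (0 <= lsum (fun l => / INR l) (seq 1 l0)). 
    { apply lsum_nonneg. intros x Hx. apply in_seq' in Hx. left; apply Rinv_0_lt_compat, lt_0_INR; lia. } lra.
  - replace (U - l0)%nat with 0%nat by lia. simpl seq. rewrite lsum_nil. apply H_nn. Qed.

Lemma Psi_const_bound j : forall l0 U c b, pnn c ->
  Sb (Psi j l0 U (fun _ => c)) b <= (INR (S b) * INR (S b) * Hh U) ^ j * Sb c b.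
Proof. induction j; intros l0 U c b Hc. simpl Psi. rewrite pow_O. lra.
  cbn [Psi]. rewrite <- tech_pow_Rmult.
  rewrite Sb_psum. set (X := INR (S b) * INR (S b)).
  assert (0 <= X) by (unfold X; apply Rmult_le_pos; apply pos_INR).
  apply Rle_trans with (lsum (fun x => X * / INR x * ((X * Hh U) ^ j * Sb c b)) (seq (S l0) (U - l0))).
  - apply lsum_le. intros x Hx. apply in_seq' in Hx.
    eapply Rle_trans. apply Sb_Dc. replace 1 with (INR 1) by reflexivity. apply le_INR. lia.
    apply Psi_nn; auto. apply Rmult_le_compat_l. apply Rmult_le_pos; auto. left; apply Rinv_0_lt_compat, lt_0_INR; lia.
    apply IHj; auto.
  - assert (E: lsum (fun x => X * / INR x * ((X * Hh U) ^ j * Sb c b)) (seq (S l0) (U - l0)) =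
      X * ((X * Hh U) ^ j * Sb c b) * lsum (fun l => / INR l) (seq (S l0) (U - l0))).
    { rewrite <- lsum_scal. apply lsum_ext. intros; ring. } rewrite E.
    assert (0 <= (X * Hh U) ^ j) by (apply pow_le, Rmult_le_pos; auto; apply H_nn).
    assert (0 <= Sb c b) by (apply Sb_nn; auto).
    assert (0 <= X * ((X * Hh U) ^ j * Sb c b)) by (apply Rmult_le_pos; auto; apply Rmult_le_pos; auto).
    eapply Rle_trans. apply Rmult_le_compat_l; auto. apply H_sub. right; ring. Qed.


Lemma K1 m l N : (1 <= m)%nat -> (l <= N)%nat ->
  pscal (/ INR m) (F m l) =
  pplus (psum (fun l' => Dc (INR l') (F m l')) (seq (S l) (N - l))) (pscal (/ INR m) (F m N)).
Proof. intros Hm HlN. extensionality b. unfold pscal, pplus, psum.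
  assert (Hm0 : INR m <> 0) by (apply INR_pos_neq0; auto).
  rewrite (lsum_ext _ (fun i => / INR m * (F m (i - 1)%nat b - F m i b))).
  - rewrite lsum_scal. rewrite (lsum_telescope (fun i => F m i b)). 
    replace (l + (N - l))%nat with N by lia. ring.
  - intros x Hx. apply in_seq' in Hx. assert (E := T1 m (x - 1)).
    replace (S (x - 1)) with x in E by lia. apply (f_equal (fun f => f b)) in E.
    unfold pscal, pminus in E. rewrite <- E. field. auto. Qed.

Definition term k N j := psum (fun m => pscal (/ INR m ^ (k + 1 - j)) (Psi j 0 N (F m))) (seq 1 N).
Definition bdry k N j := psum (fun m => pscal (/ INR m ^ (k - j + 1)) (Psi j 0 N (fun _ => F m N))) (seq 1 N).

Lemma step k N j : (j < k)%nat -> term k N j = pplus (term k N (S j)) (bdry k N j).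
Proof. intros Hj. unfold term, bdry. rewrite <- psum_plus. apply psum_ext. intros m Hm. apply in_seq' in Hm.
  assert (Hm0 : INR m <> 0) by (apply INR_pos_neq0; lia).
  replace (/ INR m ^ (k + 1 - j)) with (/ INR m ^ (k - j) * / INR m).
  2:{ replace (k + 1 - j)%nat with (S (k - j)) by lia. simpl. rewrite Rinv_mult. ring. }
  extensionality b. unfold pscal at 1.
  assert (E : Psi j 0 N (F m) = pscal (INR m) (Psi j 0 N (fun l => pscal (/ INR m) (F m l)))).
  { rewrite Psi_scal. extensionality c. unfold pscal. field. auto. }
  rewrite E. clear E.
  rewrite (Psi_ext j 0 N _ (fun l => pplus (psum (fun l' => Dc (INR l') (F m l')) (seq (S l) (N - l))) (pscal (/ INR m) (F m N)))).
  2: lia. 2:{ intros l Hl. apply K1; lia. }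
  rewrite Psi_plus, Psi_shift, Psi_scal. unfold pplus, pscal.
  replace (k + 1 - S j)%nat with (k - j)%nat by lia.
  replace (k - j + 1)%nat with (S (k - j)) by lia. simpl (INR m ^ S (k - j)). rewrite Rinv_mult.
  field. split; [apply pow_nonzero|]; auto. Qed.

Lemma K2 l N : (1 <= l)%nat ->
  psum (fun m => pscal (/ INR m ^ 1) (F m l)) (seq 1 N) = pminus (Dc (INR l) pone) (Dc (INR l) (F N l)).
Proof. intros Hl. extensionality b. unfold psum, pminus.
  rewrite (lsum_ext _ (fun i => Dc (INR l) (F (i - 1) l) b - Dc (INR l) (F i l) b)).
  - rewrite (lsum_telescope (fun i => Dc (INR l) (F i l) b) 0 N). reflexivity.
  - intros x Hx. apply in_seq' in Hx. destruct x as [|x]; [lia|].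
    assert (E := T2 x l Hl). rewrite Dc_minus in E. apply (f_equal (fun f => f b)) in E.
    unfold pscal, pminus in *. rewrite pow_1. replace (S x - 1)%nat with x by lia. auto. Qed.

Lemma final k N : (1 <= k)%nat ->
  term k N k = pminus (Psi k 0 N (fun l => Dc (INR l) pone)) (Psi k 0 N (fun l => Dc (INR l) (F N l))).
Proof. intros Hk. unfold term. replace (k + 1 - k)%nat with 1%nat by lia.
  rewrite <- Psi_minus.
  rewrite (psum_ext _ (fun m => Psi k 0 N (fun l => pscal (/ INR m ^ 1) (F m l)))) by (intros; rewrite Psi_scal; auto).
  rewrite <- (Psi_psum k 0 N (fun m l => pscal (/ INR m ^ 1) (F m l))).
  destruct k as [|k]; [lia|]. apply Psi_extS. intros l Hl. apply K2. lia. Qed.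

Lemma chain k N j : (j <= k)%nat -> term k N 0 = pplus (term k N j) (psum (bdry k N) (seq 0 j)).
Proof. induction j; intros Hj.
  - extensionality b. unfold pplus, psum. simpl. rewrite lsum_nil. ring.
  - rewrite IHj by lia. rewrite step by lia. extensionality b. unfold pplus, psum.
    rewrite lsum_seq_S. simpl (0 + j)%nat. ring. Qed.


Lemma wc_S f k n : lsum f (weak_comps (S k) n) =
  lsum (fun a => lsum (fun a' => f (a :: a')) (weak_comps k (n - a))) (seq 0 (S n)).
Proof. assert (E : weak_comps (S k) n = flat_map (fun a => map (cons a) (weak_comps k (n - a))) (seq 0 (S n))) by reflexivity.
  rewrite E. rewrite lsum_flat_map. apply lsum_ext. intros. rewrite lsum_map. auto. Qed.
Lemma wc_0 f n : lsum f (weak_comps 0 n) = if Nat.eqb n 0 then f [] else 0.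
Proof. simpl. destruct (Nat.eqb n 0); unfold lsum; simpl; lra. Qed.
Lemma wc_1 f n : lsum f (weak_comps 1 n) = f [n].
Proof. rewrite wc_S. rewrite lsum_seq_S. simpl (0 + n)%nat. rewrite Nat.sub_diag, wc_0. rewrite Nat.eqb_refl.
  rewrite (lsum_ext _ (fun _ => 0)). rewrite lsum_zero. ring.
  intros x Hx. apply in_seq' in Hx. rewrite wc_0. destruct (Nat.eqb_spec (n - x) 0); [lia|auto]. Qed.
Lemma wc_length k : forall n a, In a (weak_comps k n) -> length a = k.
Proof. induction k; intros n a Ha.
  - simpl in Ha. destruct (Nat.eqb n 0); simpl in Ha; [destruct Ha as [<-|[]]; auto| destruct Ha].
  - change (weak_comps (S k) n) with (flat_map (fun a => map (cons a) (weak_comps k (n - a))) (seq 0 (S n))) in Ha.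
    apply in_flat_map in Ha. destruct Ha as [x [_ Hx]]. apply in_map_iff in Hx. destruct Hx as [a' [<- Ha']].
    simpl. f_equal. eapply IHk; eauto. Qed.

Lemma wc_last k : forall f n, lsum f (weak_comps (S k) n) =
  lsum (fun c => lsum (fun a' => f (a' ++ [c])) (weak_comps k (n - c))) (seq 0 (S n)).
Proof. induction k; intros f n.
  - rewrite wc_1. rewrite lsum_seq_S. simpl (0 + n)%nat. rewrite Nat.sub_diag, wc_0. rewrite Nat.eqb_refl.
    rewrite (lsum_ext _ (fun _ => 0)). rewrite lsum_zero. cbn [app]. ring.
    intros x Hx. apply in_seq' in Hx. rewrite wc_0. destruct (Nat.eqb_spec (n - x) 0); [lia|auto].
  - rewrite wc_S. 
    rewrite (lsum_ext _ (fun a => lsum (fun c => lsum (fun a'' => f (a :: a'' ++ [c])) (weak_comps k (n - a - c))) (seq 0 (S (n - a))))).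
    2:{ intros a Ha. rewrite (IHk (fun a' => f (a :: a'))). auto. }
    rewrite (lsum_ext (fun c => lsum _ (weak_comps (S k) (n - c))) (fun c => lsum (fun a => lsum (fun a'' => f (a :: a'' ++ [c])) (weak_comps k (n - c - a))) (seq 0 (S (n - c))))).
    2:{ intros c Hc. rewrite wc_S. auto. }
    rewrite (lsum_tri (fun a c => lsum (fun a'' => f (a :: a'' ++ [c])) (weak_comps k (n - a - c)))).
    apply lsum_ext. intros c Hc. apply lsum_ext. intros a Ha. f_equal. f_equal. lia. Qed.

Lemma wc_rev k : forall f n, lsum f (weak_comps k n) = lsum (fun a => f (rev a)) (weak_comps k n).
Proof. induction k; intros f n.
  - rewrite !wc_0. auto.
  - rewrite (wc_S (fun a => f (rev a))). simpl rev.
    rewrite (lsum_ext _ (fun a => lsum (fun a' => f (a' ++ [a])) (weak_comps k (n - a)))).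
    + apply wc_last.
    + intros a _. rewrite (IHk (fun a' => f (a' ++ [a]))). reflexivity. Qed.

Fixpoint Y (l0 U : nat) (ks : list nat) : R :=
  match ks with
  | [] => 1
  | s :: ks' => lsum (fun l => / INR l ^ s * Y l U ks') (seq (S l0) (U - l0))
  end.

Lemma tri2 (G : nat -> nat -> R) U : forall l0,
  lsum (fun l => lsum (fun p => G l p) (seq (S l) (U - l))) (seq (S l0) (U - l0)) =
  lsum (fun p => lsum (fun l => G l p) (seq (S l0) (p - 1 - l0))) (seq (S l0) (U - l0)).
Proof. induction U; intros l0.
  - simpl. auto.
  - destruct (le_lt_dec l0 U) as [Hle|Hlt].
    + replace (S U - l0)%nat with (S (U - l0)) by lia. rewrite !lsum_seq_S.
      replace (S l0 + (U - l0))%nat with (S U) by lia.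
      replace (S U - S U)%nat with 0%nat by lia. simpl (seq (S (S U)) 0). rewrite lsum_nil.
      replace (S U - 1 - l0)%nat with (U - l0)%nat by lia.
      rewrite (lsum_ext (fun l => lsum (fun p => G l p) (seq (S l) (S U - l))) (fun l => lsum (fun p => G l p) (seq (S l) (U - l)) + G l (S U))).
      2:{ intros x Hx. apply in_seq' in Hx. replace (S U - x)%nat with (S (U - x)) by lia. rewrite lsum_seq_S.
          f_equal. f_equal. lia. }
      rewrite lsum_plus, IHU. ring.
    + replace (S U - l0)%nat with 0%nat by lia. simpl. auto. Qed.

Lemma Y_top s U : forall xs l0, Y l0 U (xs ++ [s]) =
  lsum (fun p => / INR p ^ s * Y l0 (p - 1) xs) (seq (S l0) (U - l0)).
Proof. induction xs; intros l0.
  - simpl. apply lsum_ext. intros. auto.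
  - simpl (Y l0 U ((a :: xs) ++ [s])).
    rewrite (lsum_ext _ (fun l => lsum (fun p => / INR l ^ a * (/ INR p ^ s * Y l (p - 1) xs)) (seq (S l) (U - l)))).
    2:{ intros l _. rewrite IHxs. rewrite <- lsum_scal. auto. }
    rewrite tri2. apply lsum_ext. intros p _. simpl Y. rewrite <- lsum_scal. apply lsum_ext. intros. ring. Qed.

Lemma mzv_Y ks : forall U, mzv_trunc U ks = Y 0 U (rev ks).
Proof. induction ks; intros U; [reflexivity|]. simpl rev. rewrite Y_top. simpl mzv_trunc.
  rewrite Nat.sub_0_r. apply lsum_ext. intros p Hp. rewrite IHks. auto. Qed.

Lemma last_cons_ne {A} (a : A) l d : l <> [] -> last (a :: l) d = last l d.
Proof. destruct l; [congruence|auto]. Qed.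
Lemma removelast_cons_ne {A} (a : A) l : l <> [] -> removelast (a :: l) = a :: removelast l.
Proof. destruct l; [congruence|auto]. Qed.

Lemma PsiY j : forall l0 U b, Psi (S j) l0 U (fun l => Dc (INR l) pone) b =
  lsum (fun a : list nat => INR (last a 0%nat + 1) * Y l0 U (map S (removelast a) ++ [(last a 0%nat + 2)%nat])) (weak_comps (S j) b).
Proof. induction j; intros l0 U b.
  - rewrite wc_1. simpl last. simpl removelast. simpl map. simpl app. cbn [Psi]. unfold psum. simpl Y.
    rewrite <- lsum_scal. apply lsum_ext. intros l Hl. apply in_seq' in Hl. rewrite DD_pone.
    replace (b + 1)%nat with (S b) by lia. replace (b + 2)%nat with (S (S b)) by lia. ring.
    apply INR_pos_neq0; lia.
  - change (Psi (S (S j)) l0 U (fun l => Dc (INR l) pone)) with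
      (psum (fun l => Dc (INR l) (Psi (S j) l U (fun l => Dc (INR l) pone))) (seq (S l0) (U - l0))).
    unfold psum.
    unfold Dc at 1.
    rewrite wc_S.
    rewrite (lsum_ext (fun l => lsum _ (seq 0 (S b))) 
      (fun l => lsum (fun a => lsum (fun a' : list nat => / INR l ^ S a * (INR (last a' 0%nat + 1) * Y l U (map S (removelast a') ++ [(last a' 0%nat + 2)%nat]))) (weak_comps (S j) (b - a))) (seq 0 (S b)))).
    2:{ intros l _. apply lsum_ext. intros a _. rewrite IHj. rewrite <- lsum_scal. auto. }
    rewrite lsum_swap. apply lsum_ext. intros a _.
    rewrite lsum_swap. apply lsum_ext. intros a' Ha'.
    assert (Hne : a' <> []). { apply wc_length in Ha'. destruct a'; simpl in Ha'; congruence. }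
    rewrite last_cons_ne, removelast_cons_ne by auto. simpl map. simpl app. simpl Y.
    rewrite <- lsum_scal. apply lsum_ext. intros. simpl pow. rewrite Rinv_mult. ring. Qed.


Lemma main_eq k N n : (1 <= k)%nat ->
  lsum (fun a : list nat => INR (last a 0%nat + 1) * mzv_trunc N ((last a 0%nat + 2)%nat :: map S (removelast a))) (weak_comps k n)
  = Psi k 0 N (fun l => Dc (INR l) pone) n.
Proof. intros Hk. destruct k as [|k]; [lia|]. rewrite PsiY. rewrite !wc_last.
  apply lsum_ext. intros c _.
  rewrite (lsum_ext (fun a' => _ * mzv_trunc N _) (fun a' => (fun a'' => INR (c + 1) * Y 0 N (map S a'' ++ [(c + 2)%nat])) (rev a'))).
  - rewrite <- (wc_rev k (fun a'' => INR (c + 1) * Y 0 N (map S a'' ++ [(c + 2)%nat]))). apply lsum_ext. intros a' _. rewrite last_last, removelast_last. auto.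
  - intros a' _. rewrite last_last, removelast_last. rewrite mzv_Y. simpl rev. rewrite map_rev. auto. Qed.

Lemma F_rel0 m : F (S m) 0 0%nat = F m 0 0%nat.
Proof. assert (E := F_L m 0). apply (f_equal (fun f => f 0%nat)) in E. unfold Lc, pscal in E.
  assert (INR (S m) <> 0) by apply INR_S_neq0. simpl (0 + S m)%nat in E.
  apply (Rmult_eq_reg_l (INR (S m))); auto. lra. Qed.
Lemma F_relS m b : F (S m) 0 (S b) = F m 0 (S b) + / INR (S m) * F (S m) 0 b.
Proof. assert (E := F_L m 0). apply (f_equal (fun f => f (S b))) in E. unfold Lc, pscal in E.
  assert (INR (S m) <> 0) by apply INR_S_neq0. simpl (0 + S m)%nat in E.
  apply (Rmult_eq_reg_l (INR (S m))); auto. field_simplify; auto. lra. Qed.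

Lemma Fcoef b : forall m, F m 0 b = mzsv_trunc m (repeat 1%nat b).
Proof. induction b; intros m.
  - induction m. reflexivity. rewrite F_rel0, IHm. reflexivity.
  - induction m. reflexivity. rewrite F_relS, IHm, IHb.
    simpl repeat. simpl mzsv_trunc. rewrite (lsum_seq_S _ 1 m). simpl (1 + m)%nat. rewrite (Rmult_1_r (INR (S m))). ring. Qed.

Lemma LHS_eq k N n : mzsv_trunc N (S k :: repeat 1%nat n) = term k N 0 n.
Proof. unfold term, psum, pscal. simpl mzsv_trunc. apply lsum_ext. intros m _.
  simpl Psi. rewrite Fcoef. replace (k + 1 - 0)%nat with (S k) by lia. auto. Qed.

Lemma finite_identity k N n : (1 <= k)%nat ->
  mzsv_trunc N (S k :: repeat 1%nat n) =
  lsum (fun a : list nat => INR (last a 0%nat + 1) * mzv_trunc N ((last a 0%nat + 2)%nat :: map S (removelast a))) (weak_comps k n)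
  - Psi k 0 N (fun l => Dc (INR l) (F N l)) n + lsum (fun j => bdry k N j n) (seq 0 k).
Proof. intros Hk. rewrite LHS_eq, main_eq by auto. rewrite (chain k N k) by lia. rewrite final by auto.
  unfold pplus, pminus, psum. auto. Qed.

Lemma reindex (G : nat -> R) n :
  lsum (fun t => lsum (fun c => G (c + t)%nat) (seq 0 (S (n - t)))) (seq 0 (S n)) =
  lsum (fun d => INR (d + 1) * G d) (seq 0 (S n)).
Proof. induction n.
  - unfold lsum; simpl. ring.
  - rewrite (lsum_seq_S _ 0 (S n)). rewrite (lsum_seq_S (fun d => _ * _) 0 (S n)). simpl (0 + S n)%nat.
    rewrite Nat.sub_diag.
    rewrite (lsum_ext _ (fun t => lsum (fun c => G (c + t)%nat) (seq 0 (S (n - t))) + G (S n))).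
    + rewrite lsum_plus, IHn, lsum_const, length_seq. replace (lsum (fun c : nat => G (c + S n)%nat) (seq 0 1)) with (G (S n)) by (unfold lsum; simpl; ring).
      replace (S n + 1)%nat with (S (S n)) by lia. rewrite (S_INR (S n)). ring.
    + intros t Ht. apply in_seq' in Ht. replace (S n - t)%nat with (S (n - t)) by lia.
      rewrite lsum_seq_S. f_equal. f_equal. lia. Qed.

Lemma first_eq k n : (1 <= k)%nat ->
  lsum (fun t => lsum (fun a : list nat => mzv ((last a 0%nat + t + 1)%nat :: map S (removelast a))) (weak_comps k (n + 1 - t))) (seq 1 (n + 1))
  = lsum (fun a : list nat => INR (last a 0%nat + 1) * mzv ((last a 0%nat + 2)%nat :: map S (removelast a))) (weak_comps k n).
Proof. intros Hk. destruct k as [|k]; [lia|].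
  set (G := fun d => lsum (fun a' : list nat => mzv ((d + 2)%nat :: map S a')) (weak_comps k (n - d))).
  rewrite (wc_last k _ n).
  rewrite (lsum_ext (fun c => lsum _ (weak_comps k (n - c))) (fun c => INR (c + 1) * G c)).
  2:{ intros c _. unfold G. rewrite <- lsum_scal. apply lsum_ext. intros a' _. rewrite last_last, removelast_last. auto. }
  rewrite <- reindex. replace (n + 1)%nat with (S n) by lia. rewrite lsum_seq_shift.
  apply lsum_ext. intros t Ht. apply in_seq' in Ht. rewrite (wc_last k _ (S n - S t)).
  replace (S n - S t)%nat with (n - t)%nat by lia.
  apply lsum_ext. intros c Hc. apply in_seq' in Hc. unfold G. replace (n - (c + t))%nat with (n - t - c)%nat by lia.
  apply lsum_ext. intros a' _.
  rewrite last_last, removelast_last. f_equal. f_equal. lia. Qed.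


Lemma inv_pos n : (1 <= n)%nat -> 0 < / INR n.
Proof. intros; apply Rinv_0_lt_compat, lt_0_INR; lia. Qed.

Lemma H_S U : Hh (S U) = Hh U + / INR (S U).
Proof. unfold Hh. rewrite lsum_seq_S. reflexivity. Qed.
Lemma H_mono a d : Hh a <= Hh (a + d).
Proof. induction d. rewrite Nat.add_0_r; lra. rewrite Nat.add_succ_r, H_S.
  assert (0 < / INR (S (a + d))) by (apply inv_pos; lia). lra. Qed.
Lemma H_mono' a b : (a <= b)%nat -> Hh a <= Hh b.
Proof. intros Hab. replace b with (a + (b - a))%nat by lia. apply H_mono. Qed.
Lemma H_ge1 m : (1 <= m)%nat -> 1 <= Hh m.
Proof. intros Hm. apply Rle_trans with (Hh 1). unfold Hh, lsum; simpl. lra. apply H_mono'; auto. Qed.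

Lemma mzsv_nn ks : forall m, 0 <= mzsv_trunc m ks.
Proof. induction ks; intros m; simpl. lra. apply lsum_nonneg. intros x Hx. apply in_seq' in Hx.
  apply Rmult_le_pos; auto. left; apply Rinv_0_lt_compat, pow_lt, lt_0_INR; lia. Qed.
Lemma mzv_nn ks : forall m, 0 <= mzv_trunc m ks.
Proof. induction ks; intros m; simpl. lra. apply lsum_nonneg. intros x Hx. apply in_seq' in Hx.
  apply Rmult_le_pos; auto. left; apply Rinv_0_lt_compat, pow_lt, lt_0_INR; lia. Qed.
Lemma mzv_mono ks N : mzv_trunc N ks <= mzv_trunc (S N) ks.
Proof. destruct ks as [|s ks]. simpl; lra.
  change (mzv_trunc (S N) (s :: ks)) with (lsum (fun m => / INR m ^ s * mzv_trunc (m - 1) ks) (seq 1 (S N))).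
  change (mzv_trunc N (s :: ks)) with (lsum (fun m => / INR m ^ s * mzv_trunc (m - 1) ks) (seq 1 N)).
  rewrite lsum_seq_S.
  assert (0 <= / INR (1 + N) ^ s * mzv_trunc (1 + N - 1) ks).
  { apply Rmult_le_pos. left; apply Rinv_0_lt_compat, pow_lt, lt_0_INR; lia. apply mzv_nn. } lra. Qed.

Lemma hb b : forall m, mzsv_trunc m (repeat 1%nat b) <= Hh m ^ b.
Proof. induction b; intros m. simpl; lra.
  change (mzsv_trunc m (repeat 1%nat (S b))) with (lsum (fun j => / INR j ^ 1 * mzsv_trunc j (repeat 1%nat b)) (seq 1 m)).
  apply Rle_trans with (lsum (fun j => / INR j * Hh m ^ b) (seq 1 m)).
  - apply lsum_le. intros x Hx. apply in_seq' in Hx. rewrite pow_1. apply Rmult_le_compat_l.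
    left; apply inv_pos; lia. eapply Rle_trans. apply IHb. apply pow_incr. split. apply H_nn. apply H_mono'; lia.
  - rewrite lsum_scal_r. fold (Hh m). simpl. lra. Qed.

Lemma Sb_u m b : (1 <= m)%nat -> Sb (F m 0) b <= INR (S b) * Hh m ^ b.
Proof. intros Hm. unfold Sb. apply Rle_trans with (lsum (fun _ => Hh m ^ b) (seq 0 (S b))).
  - apply lsum_le. intros a Ha. apply in_seq' in Ha. rewrite Fcoef. eapply Rle_trans. apply hb.
    apply Rle_pow. apply H_ge1; auto. lia.
  - rewrite lsum_const, length_seq. lra. Qed.

Lemma FmN m N : ple (F (S m) N) (pscal (/ INR (S N)) (F (S m) 0)).
Proof. induction m; intros b.
  - simpl F. unfold pscal. rewrite !Dc_pone. 
    rewrite pow1, Rinv_1, !Rmult_1_l, Rmult_1_r.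
    replace (INR (N + 1)) with (INR (S N)) by (f_equal; lia).
    apply Rinv_le_contravar. apply lt_0_INR; lia. rewrite <- (pow_1 (INR (S N))) at 1. apply Rle_pow.
    replace 1 with (INR 1) by reflexivity. apply le_INR; lia. lia.
  - change (F (S (S m)) N) with (pscal (INR (S (S m))) (Dc (INR (N + S (S m))) (F (S m) N))).
    change (F (S (S m)) 0) with (pscal (INR (S (S m))) (Dc (INR (0 + S (S m))) (F (S m) 0))).
    unfold pscal at 1 2 3.
    rewrite <- Rmult_assoc, (Rmult_comm (/ INR (S N))), Rmult_assoc.
    apply Rmult_le_compat_l. apply pos_INR. 
    assert (E := Dc_mono (INR (0 + S (S m))) (INR (N + S (S m))) (F (S m) N) (pscal (/ INR (S N)) (F (S m) 0))).
    rewrite Dc_scal in E. apply E. apply lt_0_INR; lia. apply le_INR; lia. apply F_nn. apply IHm. Qed.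

Fixpoint V (n : nat) : ps :=
  match n with O => pone | S n' => pscal (INR (S (S n'))) (Dc (INR (S (S n'))) (V n')) end.
Lemma V_nn n : pnn (V n).
Proof. induction n; cbn [V]. apply pone_nn. apply pscal_nn. apply pos_INR. apply Dc_nn; auto. apply lt_0_INR; lia. Qed.

Lemma FNl N l : (1 <= l)%nat -> ple (F N l) (pscal (/ INR (S N)) (V N)).
Proof. intros Hl. induction N; intros b.
  - simpl. unfold pscal. rewrite Rinv_1. lra.
  - change (F (S N) l) with (pscal (INR (S N)) (Dc (INR (l + S N)) (F N l))).
    change (V (S N)) with (pscal (INR (S (S N))) (Dc (INR (S (S N))) (V N))).
    unfold pscal. 
    assert (A1 : Dc (INR (l + S N)) (F N l) b <= Dc (INR (l + S N)) (pscal (/ INR (S N)) (V N)) b).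
    { apply Dc_mono. apply lt_0_INR; lia. lra. apply F_nn. apply IHN. }
    rewrite Dc_scal in A1. unfold pscal in A1.
    assert (A2 : Dc (INR (l + S N)) (V N) b <= Dc (INR (S (S N))) (V N) b).
    { apply Dc_mono. apply lt_0_INR; lia. apply le_INR; lia. apply V_nn. intros c; lra. }
    assert (0 < INR (S N)) by (apply lt_0_INR; lia). assert (0 < INR (S (S N))) by (apply lt_0_INR; lia).
    apply Rle_trans with (INR (S N) * (/ INR (S N) * Dc (INR (l + S N)) (V N) b)).
    apply Rmult_le_compat_l; lra.
    replace (INR (S N) * (/ INR (S N) * Dc (INR (l + S N)) (V N) b)) with (Dc (INR (l + S N)) (V N) b) by (field; lra).
    replace (/ INR (S (S N)) * (INR (S (S N)) * Dc (INR (S (S N))) (V N) b)) with (Dc (INR (S (S N))) (V N) b) by (field; lra).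
    auto. Qed.

Lemma Vu N : ple (V N) (F (S N) 0).
Proof. induction N; intros b.
  - simpl. unfold pscal. rewrite Dc_pone. simpl. rewrite pow1. destruct b; simpl; lra.
  - change (V (S N)) with (pscal (INR (S (S N))) (Dc (INR (S (S N))) (V N))).
    change (F (S (S N)) 0) with (pscal (INR (S (S N))) (Dc (INR (0 + S (S N))) (F (S N) 0))).
    unfold pscal. apply Rmult_le_compat_l. apply pos_INR. apply Dc_mono. apply lt_0_INR; lia. right; f_equal.
    apply V_nn. apply IHN. Qed.

Lemma Psi_nnS j l0 U f : (forall l, (l0 < l)%nat -> pnn (f l)) -> pnn (Psi (S j) l0 U f).
Proof. intros Hn. simpl. apply psum_nn. intros x Hx. apply in_seq' in Hx. apply Dc_nn. apply lt_0_INR; lia.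
  apply Psi_nn. intros; apply Hn; lia. Qed.
Lemma Psi_monoS j l0 U f g : (forall l, (l0 < l)%nat -> pnn (f l)) ->
  (forall l, (l0 < l)%nat -> ple (f l) (g l)) -> ple (Psi (S j) l0 U f) (Psi (S j) l0 U g).
Proof. intros Hn H1 b. simpl. unfold psum. apply lsum_le. intros x Hx. apply in_seq' in Hx. apply Dc_mono.
  apply lt_0_INR; lia. lra. apply Psi_nn. intros; apply Hn; lia.
  apply Psi_mono; intros; [apply Hn|apply H1]; lia. Qed.

Definition S2 (b N : nat) := lsum (fun m => / INR m ^ 2 * Hh m ^ b) (seq 1 N).
Definition XX (b N : nat) := INR (S b) * INR (S b) * (1 + Hh N).

Lemma XX_ge1 b N : 1 <= XX b N.
Proof. unfold XX. assert (Hb1 : 1 <= INR (S b)) by (replace 1 with (INR 1) by reflexivity; apply le_INR; lia).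
  assert (0 <= Hh N) by apply H_nn.
  replace 1 with (1 * 1 * 1) by ring. repeat apply Rmult_le_compat; lra. Qed.

Lemma XXpow b N j k : (j <= k)%nat -> (INR (S b) * INR (S b) * Hh N) ^ j <= XX b N ^ k.
Proof. intros Hjk. apply Rle_trans with (XX b N ^ j).
  - apply pow_incr. split. apply Rmult_le_pos. apply Rmult_le_pos; apply pos_INR. apply H_nn.
    unfold XX. apply Rmult_le_compat_l. apply Rmult_le_pos; apply pos_INR. lra.
  - apply Rle_pow; auto. apply XX_ge1. Qed.

Lemma bdry_nn k N j b : 0 <= bdry k N j b.
Proof. unfold bdry, psum, pscal. apply lsum_nonneg. intros m Hm. apply in_seq' in Hm. apply Rmult_le_pos.
  left; apply Rinv_0_lt_compat, pow_lt, lt_0_INR; lia. apply Psi_nn. intros; apply F_nn. Qed.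

Lemma bdry_bound k N j b : (j < k)%nat ->
  bdry k N j b <= XX b N ^ k * / INR (S N) * INR (S b) * S2 b N.
Proof. intros Hjk. unfold bdry, psum, pscal, S2. rewrite <- lsum_scal. apply lsum_le. intros m Hm. apply in_seq' in Hm.
  assert (0 < INR m) by (apply lt_0_INR; lia).
  assert (HA : / INR m ^ (k - j + 1) <= / INR m ^ 2).
  { apply Rinv_le_contravar. apply pow_lt; auto. apply Rle_pow. replace 1 with (INR 1) by reflexivity; apply le_INR; lia. lia. }
  assert (HB : Psi j 0 N (fun _ => F m N) b <= XX b N ^ k * / INR (S N) * INR (S b) * Hh m ^ b).
  { eapply Rle_trans. apply (Sb_member _ b b). apply Psi_nn; intros; apply F_nn. lia.
    eapply Rle_trans. apply Psi_const_bound. apply F_nn.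
    destruct m as [|m]; [lia|].
    assert (HC : Sb (F (S m) N) b <= / INR (S N) * (INR (S b) * Hh (S m) ^ b)).
    { eapply Rle_trans. apply Sb_mono. apply FmN. rewrite Sb_scal. apply Rmult_le_compat_l. left; apply inv_pos; lia.
      apply Sb_u; lia. }
    assert (0 <= Sb (F (S m) N) b) by (apply Sb_nn, F_nn).
    assert (0 <= (INR (S b) * INR (S b) * Hh N) ^ j) by (apply pow_le, Rmult_le_pos; [apply Rmult_le_pos; apply pos_INR|apply H_nn]).
    eapply Rle_trans. apply Rmult_le_compat. auto. auto. apply (XXpow b N j k); lia. apply HC.
    right; ring. }
  assert (0 <= Psi j 0 N (fun _ => F m N) b) by (apply Psi_nn; intros; apply F_nn).
  eapply Rle_trans. apply Rmult_le_compat. left; apply Rinv_0_lt_compat, pow_lt; auto. auto. apply HA. apply HB.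
  right; ring. Qed.

Lemma B2_nn k N b : (1 <= k)%nat -> 0 <= Psi k 0 N (fun l => Dc (INR l) (F N l)) b.
Proof. intros Hk. destruct k as [|k]; [lia|]. apply Psi_nnS. intros l Hl. apply Dc_nn. apply lt_0_INR; lia. apply F_nn. Qed.

Lemma B2_bound k N b : (1 <= k)%nat ->
  Psi k 0 N (fun l => Dc (INR l) (F N l)) b <=
  XX b N ^ k * (INR (S b) * INR (S b)) * / INR (S N) * (INR (S b) * Hh (S N) ^ b).
Proof. intros Hk. set (c := Dc 1 (pscal (/ INR (S N)) (V N))).
  assert (Hc : pnn c). { apply Dc_nn. lra. apply pscal_nn. left; apply inv_pos; lia. apply V_nn. }
  assert (H1 : Psi k 0 N (fun l => Dc (INR l) (F N l)) b <= Psi k 0 N (fun _ => c) b).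
  { destruct k as [|k]; [lia|]. apply Psi_monoS. intros l Hl. apply Dc_nn. apply lt_0_INR; lia. apply F_nn.
    intros l Hl. unfold c. apply Dc_mono. lra. replace 1 with (INR 1) by reflexivity; apply le_INR; lia. apply F_nn.
    apply FNl. lia. }
  eapply Rle_trans. apply H1. eapply Rle_trans. apply (Sb_member _ b b). apply Psi_nn; intros; auto. lia.
  eapply Rle_trans. apply Psi_const_bound. auto.
  assert (HS : Sb c b <= INR (S b) * INR (S b) * / INR (S N) * (INR (S b) * Hh (S N) ^ b)).
  { unfold c. eapply Rle_trans. apply Sb_Dc. lra. apply pscal_nn. left; apply inv_pos; lia. apply V_nn.
    rewrite Sb_scal. rewrite Rinv_1, Rmult_1_r.
    apply Rle_trans with (INR (S b) * INR (S b) * (/ INR (S N) * (INR (S b) * Hh (S N) ^ b))); [|right; ring].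
    apply Rmult_le_compat_l.
    apply Rmult_le_pos; apply pos_INR. apply Rmult_le_compat_l. left; apply inv_pos; lia.
    eapply Rle_trans. apply Sb_mono. apply Vu. apply Sb_u. lia. }
  assert (0 <= (INR (S b) * INR (S b) * Hh N) ^ k) by (apply pow_le, Rmult_le_pos; [apply Rmult_le_pos; apply pos_INR|apply H_nn]).
  assert (0 <= Sb c b) by (apply Sb_nn; auto).
  eapply Rle_trans. apply Rmult_le_compat; auto. apply (XXpow b N k k); lia. apply HS. right; ring. Qed.


Lemma ln_le_x1 x : 0 < x -> ln x <= x - 1.
Proof. intros Hx. assert (E := exp_ineq1_le (ln x)). rewrite exp_ln in E; auto. lra. Qed.

Lemma H_ln m : (1 <= m)%nat -> Hh m <= 1 + ln (INR m).
Proof. intros Hm. induction m as [|m IH]; [lia|]. destruct m as [|m].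
  - unfold Hh, lsum; simpl. rewrite ln_1. lra.
  - rewrite H_S. assert (IH' := IH ltac:(lia)).
    assert (Hp : 0 < INR (S m)) by (apply lt_0_INR; lia). assert (Hq : 0 < INR (S (S m))) by (apply lt_0_INR; lia).
    assert (E := ln_le_x1 (INR (S m) / INR (S (S m))) ltac:(apply Rdiv_lt_0_compat; auto)).
    rewrite ln_div in E; auto.
    assert (INR (S m) / INR (S (S m)) - 1 = - / INR (S (S m))).
    { rewrite (S_INR (S m)). field. lra. } lra. Qed.

Lemma pow_exp y r : exp y ^ r = exp (INR r * y).
Proof. induction r. simpl. rewrite Rmult_0_l, exp_0. auto.
  simpl pow. rewrite IHr, <- exp_plus. f_equal. rewrite S_INR. ring. Qed.

Lemma exp_le x y : x <= y -> exp x <= exp y.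
Proof. intros [H1|H1]. left; apply exp_increasing; auto. subst; lra. Qed.

Lemma exp_half_sqrt x : 0 < x -> exp (ln x / 2) = sqrt x.
Proof. intros Hx. symmetry. apply sqrt_lem_1. lra. left; apply exp_pos.
  rewrite <- exp_plus. replace (ln x / 2 + ln x / 2) with (ln x) by field. apply exp_ln; auto. Qed.

Lemma H_pow_bound r m : (1 <= m)%nat -> Hh m ^ r <= (2 * INR r + 3) ^ r * sqrt (INR m).
Proof. intros Hm. set (L := ln (INR m)).
  assert (Hm0 : 0 < INR m) by (apply lt_0_INR; lia).
  assert (HL : 0 <= L). { unfold L. rewrite <- ln_1. apply ln_le. lra. replace 1 with (INR 1) by reflexivity; apply le_INR; lia. }
  assert (Hr : 0 <= INR r) by apply pos_INR.
  set (y := L / (2 * INR r + 2)).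
  assert (Hy : 0 <= y) by (unfold y; apply Rdiv_le_0_compat; lra).
  assert (Ey := exp_ineq1_le y).
  assert (HH : Hh m <= (2 * INR r + 3) * exp y).
  { eapply Rle_trans. apply H_ln; auto. fold L. replace L with ((2 * INR r + 2) * y) by (unfold y; field; lra). nra. }
  eapply Rle_trans. apply pow_incr. split. apply H_nn. apply HH.
  rewrite Rpow_mult_distr, pow_exp. apply Rmult_le_compat_l. apply pow_le; lra.
  rewrite <- exp_half_sqrt; auto. apply exp_le. fold L. unfold y.
  apply Rle_trans with (INR r / (2 * INR r + 2) * L). right; field; lra.
  apply Rle_trans with (1/2 * L); [|right; field].
  apply Rmult_le_compat_r; auto. apply Rmult_le_reg_r with (2 * INR r + 2). lra.
  field_simplify; lra. Qed.

Lemma sqrt_sum_aux N : (1 <= N)%nat ->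
  lsum (fun m => / INR m ^ 2 * sqrt (INR m)) (seq 1 N) <= 3 - 2 * / sqrt (INR N).
Proof. intros HN. induction N as [|N IH]; [lia|]. destruct N as [|N].
  - unfold lsum; simpl. rewrite sqrt_1. lra.
  - rewrite lsum_seq_S. eapply Rle_trans. apply Rplus_le_compat_r. apply IH. lia.
    replace (1 + S N)%nat with (S (S N)) by lia.
    set (a := sqrt (INR (S N))). set (c := sqrt (INR (S (S N)))).
    assert (Ha : 0 < a) by (apply sqrt_lt_R0, lt_0_INR; lia).
    assert (Hc : 0 < c) by (apply sqrt_lt_R0, lt_0_INR; lia).
    assert (Ea : a * a = INR (S N)) by (apply sqrt_sqrt, pos_INR).
    assert (Ec : c * c = INR (S (S N))) by (apply sqrt_sqrt, pos_INR).
    assert (Eca : c * c = a * a + 1) by (rewrite Ea, Ec, (S_INR (S N)); ring).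
    rewrite <- Ec. 
    assert (key : a * (2 * a * a + 3) <= 2 * c * (a * a + 1)).
    { assert (E2 : (2 * c * (a * a + 1)) * (2 * c * (a * a + 1)) - (a * (2 * a * a + 3)) * (a * (2 * a * a + 3)) = 3 * a * a + 4).
      { replace ((2 * c * (a * a + 1)) * (2 * c * (a * a + 1))) with (4 * (c * c) * (a * a + 1) * (a * a + 1)) by ring.
        rewrite Eca. ring. }
      set (P := a * (2 * a * a + 3)) in *. set (Q := 2 * c * (a * a + 1)) in *.
      assert (0 <= P) by (unfold P; apply Rmult_le_pos; nra). assert (0 <= Q) by (unfold Q; nra).
      destruct (Rle_or_lt P Q) as [|Hlt]; auto. exfalso.
      assert (0 < (P - Q) * (P + Q)) by (apply Rmult_lt_0_compat; lra).
      assert (0 < 3 * a * a + 4) by nra. nra. }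
    assert (E3 : 3 - 2 * / a + / (c * c) ^ 2 * c - (3 - 2 * / c) = - ((2 * c * (c * c) - a - 2 * a * (c * c)) / (a * c * c * c))).
    { field. lra. }
    assert (E4 : 2 * c * (c * c) - a - 2 * a * (c * c) = 2 * c * (a * a + 1) - a * (2 * a * a + 3)) by (rewrite Eca; ring).
    rewrite E4 in E3.
    assert (0 <= (2 * c * (a * a + 1) - a * (2 * a * a + 3)) / (a * c * c * c)).
    { apply Rdiv_le_0_compat. lra. repeat apply Rmult_lt_0_compat; auto. }
    lra. Qed.

Lemma sqrt_sum N : lsum (fun m => / INR m ^ 2 * sqrt (INR m)) (seq 1 N) <= 3.
Proof. destruct N. unfold lsum; simpl; lra. eapply Rle_trans. apply sqrt_sum_aux; lia.
  assert (0 < / sqrt (INR (S N))) by (apply Rinv_0_lt_compat, sqrt_lt_R0, lt_0_INR; lia). lra. Qed.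

Lemma S2_bound b N : S2 b N <= (2 * INR b + 3) ^ b * 3.
Proof. unfold S2. apply Rle_trans with ((2 * INR b + 3) ^ b * lsum (fun m => / INR m ^ 2 * sqrt (INR m)) (seq 1 N)).
  - rewrite <- lsum_scal. apply lsum_le. intros m Hm. apply in_seq' in Hm.
    assert (0 < / INR m ^ 2) by (apply Rinv_0_lt_compat, pow_lt, lt_0_INR; lia).
    assert (E := H_pow_bound b m ltac:(lia)). nra.
  - apply Rmult_le_compat_l. apply pow_le. assert (0 <= INR b) by apply pos_INR. lra. apply sqrt_sum. Qed.

Lemma lim_sqrt_inf : is_lim_seq (fun N => sqrt (INR (S N))) p_infty.
Proof. apply is_lim_seq_spec. intros M. 
  assert (E := is_lim_seq_INR). apply is_lim_seq_spec in E. destruct (E (M * M)) as [N0 HN0].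
  exists N0. intros n Hn. specialize (HN0 n Hn).
  assert (INR n <= INR (S n)) by (apply le_INR; lia).
  destruct (Rle_or_lt M 0).
  - assert (0 < sqrt (INR (S n))) by (apply sqrt_lt_R0, lt_0_INR; lia). lra.
  - rewrite <- (sqrt_square M) by lra. apply sqrt_lt_1_alt. split. nra. lra. Qed.

Lemma lim_invsqrt : is_lim_seq (fun N => / sqrt (INR (S N))) 0.
Proof. replace (Finite 0) with (Rbar_inv p_infty) by reflexivity. apply is_lim_seq_inv.
  apply lim_sqrt_inf. discriminate. Qed.


Lemma is_lim_seq_lsum {A} (L : list A) (g : A -> nat -> R) (lim : A -> R) :
  (forall a, In a L -> is_lim_seq (g a) (lim a)) ->
  is_lim_seq (fun N => lsum (fun a => g a N) L) (lsum lim L).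
Proof. induction L; intros Hl.
  - apply (is_lim_seq_ext (fun _ => 0)). intros; reflexivity. rewrite lsum_nil. apply is_lim_seq_const.
  - apply (is_lim_seq_ext (fun N => g a N + lsum (fun a => g a N) L)). intros; reflexivity.
    rewrite lsum_cons. apply is_lim_seq_plus'. apply Hl; left; auto. apply IHL. intros; apply Hl; right; auto. Qed.


Definition EE (k n N : nat) := INR k * (XX n N ^ k * / INR (S N) * INR (S n) * S2 n N) +
  XX n N ^ k * (INR (S n) * INR (S n)) * / INR (S N) * (INR (S n) * Hh (S N) ^ n).

Lemma EE_bound (k n : nat) : exists A, forall N, EE k n N <= A * / sqrt (INR (S N)).
Proof.
  set (al := (INR (S n) * INR (S n) * 2) ^ k).
  set (Cs := (2 * INR n + 3) ^ n * 3).
  set (ga := (2 * INR (k + n) + 3) ^ (k + n)).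
  exists ((INR k * INR (S n) * al * Cs + INR (S n) * INR (S n) * INR (S n) * al) * ga).
  intros N. unfold EE.
  set (P := Hh (S N)).
  assert (HP1 : 1 <= P) by (apply H_ge1; lia).
  assert (Hn1 : 0 <= INR (S n)) by apply pos_INR. assert (Hk0 : 0 <= INR k) by apply pos_INR.
  assert (HSN : 0 < INR (S N)) by (apply lt_0_INR; lia).
  assert (Hal : 0 <= al) by (apply pow_le; nra).
  assert (HCs : 0 <= Cs) by (unfold Cs; apply Rmult_le_pos; [apply pow_le; assert (0 <= INR n) by apply pos_INR; lra|lra]).
  assert (Hga : 0 <= ga) by (apply pow_le; assert (0 <= INR (k + n)) by apply pos_INR; lra).
  assert (h1 : XX n N ^ k <= al * P ^ k).
  { unfold al. rewrite <- Rpow_mult_distr. apply pow_incr. split. left; apply Rlt_le_trans with 1; [lra|apply XX_ge1].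
    unfold XX. assert (Hh N <= P) by (apply H_mono'; lia).
    apply Rle_trans with (INR (S n) * INR (S n) * (2 * P)); [apply Rmult_le_compat_l; [nra| lra] | right; ring]. }
  assert (hX : 0 <= XX n N ^ k) by (apply pow_le; assert (1 <= XX n N) by apply XX_ge1; lra).
  assert (h2 : S2 n N <= Cs) by apply S2_bound.
  assert (hS2 : 0 <= S2 n N). { unfold S2. apply lsum_nonneg. intros m Hm. apply in_seq' in Hm.
    apply Rmult_le_pos. left; apply Rinv_0_lt_compat, pow_lt, lt_0_INR; lia. apply pow_le, H_nn. }
  assert (hPk : 0 <= P ^ k) by (apply pow_le; lra).
  assert (hPn : 0 <= P ^ n) by (apply pow_le; lra).
  assert (h3 : P ^ k <= P ^ (k + n)) by (apply Rle_pow; auto; lia).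
  assert (h3' : P ^ k * P ^ n = P ^ (k + n)) by (rewrite pow_add; auto).
  assert (h4 : P ^ (k + n) <= ga * sqrt (INR (S N))) by (apply H_pow_bound; lia).
  set (s := sqrt (INR (S N))).
  assert (Hs : 0 < s) by (apply sqrt_lt_R0; auto).
  assert (Es : s * s = INR (S N)) by (apply sqrt_sqrt; lra).
  assert (T1 : XX n N ^ k * S2 n N <= al * Cs * P ^ (k + n)).
  { apply Rle_trans with ((al * P ^ k) * Cs). apply Rmult_le_compat; auto.
    apply Rle_trans with (al * Cs * P ^ k). right; ring. apply Rmult_le_compat_l. nra. auto. }
  assert (T2 : XX n N ^ k * P ^ n <= al * P ^ (k + n)).
  { apply Rle_trans with ((al * P ^ k) * P ^ n). apply Rmult_le_compat_r; auto. rewrite <- h3'. right; ring. }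
  set (K := INR k * INR (S n) * al * Cs + INR (S n) * INR (S n) * INR (S n) * al).
  assert (HK : 0 <= K).
  { unfold K. assert (0 <= INR k * INR (S n)) by (apply Rmult_le_pos; auto).
    assert (0 <= INR k * INR (S n) * al) by (apply Rmult_le_pos; auto).
    assert (0 <= INR k * INR (S n) * al * Cs) by (apply Rmult_le_pos; auto).
    assert (0 <= INR (S n) * INR (S n)) by (apply Rmult_le_pos; auto).
    assert (0 <= INR (S n) * INR (S n) * INR (S n)) by (apply Rmult_le_pos; auto).
    assert (0 <= INR (S n) * INR (S n) * INR (S n) * al) by (apply Rmult_le_pos; auto). lra. }
  apply Rle_trans with (/ INR (S N) * (K * P ^ (k + n))).
  - apply Rle_trans with (/ INR (S N) * (INR k * INR (S n) * (XX n N ^ k * S2 n N) + INR (S n) * INR (S n) * INR (S n) * (XX n N ^ k * P ^ n))).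
    right; ring.
    apply Rmult_le_compat_l. left; apply Rinv_0_lt_compat; auto.
    unfold K. assert (0 <= INR k * INR (S n)) by (apply Rmult_le_pos; auto).
    assert (0 <= INR (S n) * INR (S n)) by (apply Rmult_le_pos; auto).
    assert (0 <= INR (S n) * INR (S n) * INR (S n)) by (apply Rmult_le_pos; auto).
    assert (INR k * INR (S n) * (XX n N ^ k * S2 n N) <= INR k * INR (S n) * (al * Cs * P ^ (k + n))) by (apply Rmult_le_compat_l; auto).
    assert (INR (S n) * INR (S n) * INR (S n) * (XX n N ^ k * P ^ n) <= INR (S n) * INR (S n) * INR (S n) * (al * P ^ (k + n))) by (apply Rmult_le_compat_l; auto).
    nra.
  - apply Rle_trans with (/ INR (S N) * (K * (ga * s))).
    apply Rmult_le_compat_l. left; apply Rinv_0_lt_compat; auto. apply Rmult_le_compat_l; auto.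
    right. rewrite <- Es. fold K. field. lra. Qed.

Lemma EE_nn k n N : 0 <= EE k n N.
Proof. unfold EE.
  assert (hX : 0 <= XX n N ^ k) by (apply pow_le; assert (1 <= XX n N) by apply XX_ge1; lra).
  assert (hS2 : 0 <= S2 n N). { unfold S2. apply lsum_nonneg. intros m Hm. apply in_seq' in Hm.
    apply Rmult_le_pos. left; apply Rinv_0_lt_compat, pow_lt, lt_0_INR; lia. apply pow_le, H_nn. }
  assert (0 < / INR (S N)) by (apply Rinv_0_lt_compat, lt_0_INR; lia).
  assert (0 <= INR (S n)) by apply pos_INR. assert (0 <= INR k) by apply pos_INR.
  assert (0 <= Hh (S N) ^ n) by (apply pow_le, H_nn).
  apply Rplus_le_le_0_compat; repeat apply Rmult_le_pos; auto; lra. Qed.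

Definition LHS (k n N : nat) := mzsv_trunc N (S k :: repeat 1%nat n).
Definition Xa (a : list nat) N := mzv_trunc N ((last a 0%nat + 2)%nat :: map S (removelast a)).
Definition main (k n N : nat) := lsum (fun a => INR (last a 0%nat + 1) * Xa a N) (weak_comps k n).

Lemma err_bound k n (hk : (1 <= k)%nat) N : Rabs (LHS k n N - main k n N) <= EE k n N.
Proof. assert (FI := finite_identity k N n hk). unfold LHS, main, Xa. rewrite FI.
  assert (B2a := B2_nn k N n hk). assert (B2b := B2_bound k N n hk).
  assert (Bda : 0 <= lsum (fun j => bdry k N j n) (seq 0 k)) by (apply lsum_nonneg; intros; apply bdry_nn).
  assert (Bdb : lsum (fun j => bdry k N j n) (seq 0 k) <= INR k * (XX n N ^ k * / INR (S N) * INR (S n) * S2 n N)).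
  { eapply Rle_trans. apply (lsum_le _ (fun _ => XX n N ^ k * / INR (S N) * INR (S n) * S2 n N)).
    intros j Hj. apply in_seq' in Hj. apply bdry_bound; lia. rewrite lsum_const, length_seq. lra. }
  unfold EE. apply Rabs_le. lra. Qed.

Lemma LHS_bound k n (hk : (1 <= k)%nat) N : LHS k n N <= (2 * INR n + 3) ^ n * 3.
Proof. eapply Rle_trans; [|apply (S2_bound n N)]. unfold LHS, S2.
  change (mzsv_trunc N (S k :: repeat 1%nat n)) with (lsum (fun m => / INR m ^ S k * mzsv_trunc m (repeat 1%nat n)) (seq 1 N)).
  apply lsum_le. intros m Hm. apply in_seq' in Hm. 
  assert (0 < INR m) by (apply lt_0_INR; lia).
  apply Rmult_le_compat. left; apply Rinv_0_lt_compat, pow_lt; auto. apply mzsv_nn.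
  apply Rinv_le_contravar. apply pow_lt; auto. apply Rle_pow. replace 1 with (INR 1) by reflexivity; apply le_INR; lia. lia.
  apply hb. Qed.

Lemma part2 k n (hk : (1 <= k)%nat) : mzsv (S k :: repeat 1%nat n) =
  lsum (fun a : list nat => INR (last a 0%nat + 1) * mzv ((last a 0%nat + 2)%nat :: map S (removelast a))) (weak_comps k n).
Proof.
  destruct (EE_bound k n) as [A HA].
  assert (Hsq : forall N, 1 <= sqrt (INR (S N))).
  { intros N. rewrite <- sqrt_1. apply sqrt_le_1_alt. replace 1 with (INR 1) by reflexivity; apply le_INR; lia. }
  assert (HA0 : 0 <= A). { assert (E0 := HA 0%nat). assert (E1 := EE_nn k n 0%nat).
    assert (0 < / sqrt (INR 1)) by (apply Rinv_0_lt_compat; specialize (Hsq 0%nat); lra). nra. }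
  set (Cs := (2 * INR n + 3) ^ n * 3).
  assert (Hmain : forall N, main k n N <= Cs + A).
  { intros N. assert (E1 := err_bound k n hk N). apply Rabs_le_between' in E1. assert (E2 := LHS_bound k n hk N).
    assert (E3 := HA N). assert (/ sqrt (INR (S N)) <= 1).
    { rewrite <- Rinv_1. apply Rinv_le_contravar. lra. apply Hsq. }
    fold Cs in E2. nra. }
  assert (HX : forall a, In a (weak_comps k n) -> is_lim_seq (Xa a) (mzv ((last a 0%nat + 2)%nat :: map S (removelast a)))).
  { intros a Ha.
    assert (Hex : ex_finite_lim_seq (Xa a)).
    { apply (ex_finite_lim_seq_incr _ (Cs + A)). intros N; apply mzv_mono.
      intros N. eapply Rle_trans; [|apply (Hmain N)]. unfold main.
      eapply Rle_trans; [|apply (lsum_member (fun a => INR (last a 0%nat + 1) * Xa a N) _ a)].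
      - assert (0 <= Xa a N) by apply mzv_nn. assert (1 <= INR (last a 0%nat + 1)).
        { replace 1 with (INR 1) by reflexivity; apply le_INR; lia. } nra.
      - intros y _. apply Rmult_le_pos. apply pos_INR. apply mzv_nn.
      - auto. }
    destruct Hex as [l Hl]. unfold mzv. fold (Xa a). rewrite (is_lim_seq_unique _ _ Hl). simpl. auto. }
  assert (Hmainlim : is_lim_seq (main k n) (lsum (fun a : list nat => INR (last a 0%nat + 1) * mzv ((last a 0%nat + 2)%nat :: map S (removelast a))) (weak_comps k n))).
  { unfold main. apply (is_lim_seq_lsum _ (fun a N => INR (last a 0%nat + 1) * Xa a N)).
    intros a Ha. specialize (HX a Ha). apply (is_lim_seq_scal_l _ (INR (last a 0%nat + 1))) in HX. simpl in HX. auto. }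
  assert (Herr : is_lim_seq (fun N => LHS k n N - main k n N) 0).
  { assert (L1 := is_lim_seq_scal_l _ A _ lim_invsqrt). rewrite Rbar_mult_0_r in L1.
    assert (L2 := proj1 (is_lim_seq_opp _ _) L1). 
    replace (Rbar_opp 0) with (Finite 0) in L2 by (simpl; f_equal; ring).
    apply (is_lim_seq_le_le (fun N => - (A * / sqrt (INR (S N)))) _ (fun N => A * / sqrt (INR (S N)))).
    - intros N. assert (E1 := err_bound k n hk N). assert (E2 := HA N). apply Rabs_le_between' in E1.
      split; lra.
    - exact L2.
    - exact L1. }
  assert (Hl : is_lim_seq (LHS k n) (lsum (fun a : list nat => INR (last a 0%nat + 1) * mzv ((last a 0%nat + 2)%nat :: map S (removelast a))) (weak_comps k n) + 0)).
  { apply (is_lim_seq_ext (fun N => main k n N + (LHS k n N - main k n N))). intros; ring.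
    apply is_lim_seq_plus'; auto. }
  unfold mzsv. fold (LHS k n). rewrite (is_lim_seq_unique _ _ Hl). simpl. ring. Qed.


Theorem proposition2p5 (k n : nat) (hk : (1 <= k)%nat) (hn : (1 <= n)%nat) :
  mzsv (S k :: repeat 1%nat n) =
    lsum (fun t =>
      lsum (fun a => mzv ((last a 0%nat + t + 1)%nat :: map S (removelast a)))
           (weak_comps k (n + 1 - t)))
      (seq 1 (n + 1))
  /\
  mzsv (S k :: repeat 1%nat n) =
    lsum (fun a => INR (last a 0%nat + 1) * mzv ((last a 0%nat + 2)%nat :: map S (removelast a)))
         (weak_comps k n).
Proof.
  split.
  - rewrite (first_eq k n hk). apply part2; auto.
  - apply part2; auto.
Qed.
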